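(* Let $X$ be a real random variable such that $\mathbb{E}(|X|^{2p})\le2^{p+1}p!$ for every integer $p\ge1$. Then for all $\lambda\in\mathbb{R}$ the series below converges and $$1+\sum_{k=2}^\infty\frac{\lambda^k}{k!}\mathbb{E}(|X|^k)\le\exp(9\lambda^2/4).$$ *)

(* Defs.v *)
From HB Require Import structures.
From mathcomp Require Import all_boot all_order all_algebra.
From mathcomp Require Import all_classical all_reals all_analysis.
Set Implicit Arguments. Unset Strict Implicit. Unset Printing Implicit Defensive.

(* Main.v *)
Require Import Defs.
From HB Require Import structures.
From mathcomp Require Import all_boot all_order all_algebra.
From mathcomp Require Import all_classical all_reals all_analysis.
From mathcomp Require Import measurable_realfun.
From mathcomp Require Import zify ring lra.
Import Order.TTheory GRing.Theory Num.Theory numFieldNormedType.Exports.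
Local Open Scope ring_scope.
Lemma natineq r : (15 * 2^(r+3) * ((r+2)`!)^2 * 4^(r+2) <= 16 * 9^(r+2) * (2*r+3)`!)%N.
Proof.
elim: r => [|r IH].  by [].
have e1 : (2^(r.+1+3) = 2 * 2^(r+3))%N by rewrite addSn expnS.
have e2 : (4^(r.+1+2) = 4 * 4^(r+2))%N by rewrite addSn expnS.
have e3 : (9^(r.+1+2) = 9 * 9^(r+2))%N by rewrite addSn expnS.
have e4 : ((r.+1+2)`! = (r+3) * (r+2)`!)%N by rewrite addSn factS; congr (_*_)%N; lia.
have e5 : ((2*r.+1+3)`! = (2*r+5)*(2*r+4)*(2*r+3)`!)%N.
  by rewrite (_ : (2*r.+1+3 = (2*r+3).+2)%N) ?factS ?mulnA; [congr (_*_*_)%N; lia|lia].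
rewrite e1 e2 e3 e4 e5.
move: IH; set A := (2^(r+3))%N; set B := (4^(r+2))%N; set C := (9^(r+2))%N; set G := (r+2)`!; set F := (2*r+3)`!.
move=> IH; clearbody A B C G F; clear e1 e2 e3 e4 e5.
apply: (@leq_trans (8*(r+3)^2 * (15 * A * G ^ 2 * B))%N).
  rewrite leq_eqVlt; apply/orP; left; apply/eqP; ring.
apply: (@leq_trans (8*(r+3)^2 * (16 * C * F))%N); first by rewrite leq_mul2l IH orbT.
apply: (@leq_trans (18*(2*r+5)*(r+2) * (16 * C * F))%N).
  apply: leq_mul => //; clear IH; nia.
rewrite leq_eqVlt; apply/orP; left; apply/eqP; clear IH; ring.
Qed.

Section RealPart.
Variable R : realType.

Lemma key_coef (r : nat) :
  (2/3 / (2*r+3)`!%:R + (1 / (2*r+4)`!%:R + 3/8 / (2*r+5)`!%:R)) *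
    (2^+(r+3) * (r+2)`!%:R) <= (9/4)^+(r+2) / (r+2)`!%:R :> R.
Proof.
set F : R := (2*r+3)`!%:R; set G : R := (r+2)`!%:R; set x : R := r%:R.
have F0 : 0 < F by rewrite ltr0n fact_gt0.
have G0 : 0 < G by rewrite ltr0n fact_gt0.
have x0 : 0 <= x by rewrite ler0n.
have F4 : (2*r+4)`!%:R = (2*x+4) * F :> R.
  rewrite (_ : (2*r+4 = (2*r+3).+1)%N) ?factS ?natrM; last lia.
  by rewrite /F /x; congr (_ * _); rewrite -addn1 -addnA natrD natrM.
have F5 : (2*r+5)`!%:R = (2*x+5) * ((2*x+4) * F) :> R.
  rewrite (_ : (2*r+5 = (2*r+4).+1)%N) ?factS ?natrM; last lia.
  by rewrite F4 /x; congr (_ * _); rewrite -addn1 -addnA natrD natrM.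
rewrite F4 F5.
have := natineq r; rewrite -(ler_nat R) !natrM !natrX -/G -/F => Hn.
clearbody F G x.
have h1 : 1 / (2*x+4) <= 1/4 :> R.
  by rewrite ler_pdivrMr; lra.
have h2 : 3/8 / ((2*x+5) * (2*x+4)) <= 3/160 :> R.
  by rewrite ler_pdivrMr; [nra|nra].
have hc : 2/3 / F + (1 / ((2*x+4) * F) + 3/8 / ((2*x+5) * ((2*x+4) * F)))
    <= 15/16 / F.
  have -> : 2/3 / F + (1 / ((2*x+4) * F) + 3/8 / ((2*x+5) * ((2*x+4) * F)))
     = (2/3 + 1 / (2*x+4) + 3/8 / ((2*x+5) * (2*x+4))) * F^-1.
    by field; rewrite ?F0 //; apply/and3P; split; rewrite ?gt_eqF //; lra.
  by rewrite mulrC (mulrC (15/16)) ler_wpM2l ?invr_ge0 ?ltW //; lra.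
apply: le_trans (ler_wpM2r _ hc) _; first by rewrite mulr_ge0 ?exprn_ge0 ?ltW.
move: Hn => H.
have e1 : 15/16/F * (2^+(r+3) * G) = (15 * 2^+(r+3) * G^+2 * 4^+(r+2)) / (16 * F * G * 4^+(r+2)).
  by field; rewrite ?gt_eqF ?expf_neq0 //.
have e2 : (9/4)^+(r+2) / G = (16 * 9^+(r+2) * F) / (16 * F * G * 4^+(r+2)).
  by rewrite expr_div_n; field; rewrite ?gt_eqF ?expf_neq0 //.
rewrite e1 e2 ler_wpM2r // invr_ge0 !mulr_ge0 ?exprn_ge0 ?ltW //.
Qed.
End RealPart.

Section Main.
Variable R : realType.
Variable M : nat -> R.
Hypothesis M0 : forall k, 0 <= M k.
Hypothesis Mev : forall q, (1 <= q)%N -> M (2*q) <= 2^+(q.+1) * q`!%:R.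
Hypothesis Modd : forall (t : R) q, 0 <= t ->
  2 * (t^+(2*q+1) * M(2*q+1)) <= 3/4 * (t^+(2*q) * M(2*q)) + 4/3 * (t^+(2*q.+1) * M(2*q.+1)).

Lemma series_le_expR (z : R) n : 0 <= z -> series (exp_coeff z) n <= expR z.
Proof.
move=> z0; apply: nondecreasing_cvgn_le; last exact: is_cvg_series_exp_coeff.
apply: (@nondecreasing_series _ _ xpredT 0) => k _ _.
by rewrite /exp_coeff /= divr_ge0 ?exprn_ge0.
Qed.

Variable l : R.
Let t := `|l|.
Let t0 : 0 <= t. Proof. exact: normr_ge0. Qed.
Let b k := t ^+ k / k`!%:R * M k.
Let T q := t ^+ (2*q) * M (2*q).
Let al q := 1 / (2*q)`!%:R + 3/8 / (2*q+1)`!%:R :> R.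
Let be q := 2/3 / (2*q+1)`!%:R :> R.
Let z := 9 * t^+2 / 4.
Let a := exp_coeff z.

Lemma b0 k : 0 <= b k.
Proof. by rewrite /b mulr_ge0 ?divr_ge0 ?exprn_ge0. Qed.
Lemma T0 q : 0 <= T q.
Proof. by rewrite /T mulr_ge0 ?exprn_ge0. Qed.
Lemma al0 q : 0 <= al q.
Proof. by rewrite /al addr_ge0 ?divr_ge0. Qed.
Lemma be0 q : 0 <= be q.
Proof. by rewrite /be divr_ge0. Qed.

Lemma hpair q : b (2*q) + b (2*q+1) <= al q * T q + be q * T q.+1.
Proof.
have := Modd t q t0; set P := t^+(2*q+1) * M(2*q+1) => hP.
have -> : b (2*q+1) = P / (2*q+1)`!%:R by rewrite /b /P mulrAC.
have -> : b (2*q) = T q / (2*q)`!%:R by rewrite /b /T mulrAC.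
set f2 : R := (2*q)`!%:R; set f3 : R := (2*q+1)`!%:R.
have f30 : 0 <= f3^-1 by rewrite invr_ge0 ler0n.
have hP' : P / f3 <= (3/8 * T q + 2/3 * T q.+1) / f3.
  by apply: ler_wpM2r => //; move: hP; rewrite /T; clearbody P; lra.
rewrite /al /be -/f2 -/f3.
apply: le_trans (lerD (lexx _) hP') _.
rewrite le_eqVlt; apply/orP; left; apply/eqP.
move: (T q) (T q.+1) => x y; clear hP hP'; clearbody f2 f3 P; ring.
Qed.


Let b' k := b k.+2.

Lemma hkey r : be (r+1)%N * T (r+2)%N + al (r+2)%N * T (r+2)%N <= a (r+2)%N.
Proof.
rewrite -mulrDl.
have ec : be (r+1)%N + al (r+2)%N =
    2/3/(2*r+3)`!%:R + (1/(2*r+4)`!%:R + 3/8/(2*r+5)`!%:R).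
  have e1 : (2*(r+1)+1 = 2*r+3)%N by lia.
  have e2 : (2*(r+2)+1 = 2*r+5)%N by lia.
  have e3 : (2*(r+2) = 2*r+4)%N by lia.
  by rewrite /be /al e1 e2 e3.
have c0 : 0 <= be (r+1)%N + al (r+2)%N by rewrite addr_ge0 ?be0 ?al0.
have hT : T (r+2)%N <= (t^+2)^+(r+2)%N * (2^+(r+3)%N * (r+2)`!%:R).
  rewrite /T -exprM ler_wpM2l ?exprn_ge0 //.
  have -> : (r+3 = (r+2).+1)%N by lia.
  by apply: Mev; lia.
apply: le_trans (ler_wpM2l c0 hT) _.
rewrite ec mulrCA.
apply: le_trans (ler_wpM2l (exprn_ge0 _ (sqr_ge0 t)) (key_coef R r)) _.
rewrite /a /exp_coeff /z /=.
have -> : 9 * t^+2 / 4 = 9/4 * t^+2 by rewrite mulrAC.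
have -> : (9/4 * t^+2)^+(r+2)%N / (r+2)`!%:R = (t^+2)^+(r+2)%N * ((9/4)^+(r+2)%N / (r+2)`!%:R) by rewrite exprMn -mulrA mulrCA.
by [].
Qed.

Lemma hbase : al 1 * T 1 <= a 1.
Proof.
have h := Mev 1 isT.
have h' : T 1 <= 4 * t^+2.
  rewrite /T; apply: le_trans (ler_wpM2l (exprn_ge0 _ t0) h) _.
  have e4 : (2:R)^+2 * 1`!%:R = 4 by rewrite expr2 mulr1; ring.
  by rewrite (_ : (2*1 = 2)%N) // e4 mulrC.
have -> : al 1 = 9/16.
  rewrite /al (_ : (2*1+1 = 3)%N) // (_ : (2*1 = 2)%N) //=.
  rewrite (_ : (3`! = 6)%N) // (_ : (2`! = 2)%N) //.
  by field.
rewrite /a /exp_coeff /z /= expr1 divr1.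
clear h; lra.
Qed.



Lemma s0 (u : R ^nat) : series u 0 = 0.
Proof. by rewrite /series /= big_geq. Qed.

Lemma claim N : series b' (2*N.+1)%N <= series a N.+2 - 1 + be N.+1 * T N.+2.
Proof.
elim: N => [|N IH].
  rewrite !seriesSr !s0 !add0r /b'.
  have hp := hpair 1; rewrite (_ : (2*1 = 2)%N) // (_ : (2+1 = 3)%N) // in hp.
  have hb := hbase.
  have -> : a 0%N = 1 by rewrite /a /exp_coeff /= expr0 divr1.
  move: hp hb; lra.
have e : (2*N.+2 = (2*N.+1).+2)%N by lia.
rewrite e 2!seriesSr.
have hp := hpair N.+2.
rewrite (_ : (2*N.+2+1 = (2*N.+1).+3)%N) ?e in hp; last by lia.
have hk := hkey N; rewrite !addn1 !addn2 in hk.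
have eb k : b' k = b k.+2 by [].
rewrite !eb.
move: IH hp hk; clear e.
rewrite [series a N.+3]seriesSr; lra.
Qed.

Lemma bound n : series b' n <= expR z - 1.
Proof.
have z0 : 0 <= z by rewrite /z divr_ge0 ?mulr_ge0 ?sqr_ge0.
apply: le_trans (_ : series b' n <= series b' (2*n.+1)%N) _.
  apply: (@nondecreasing_series _ b' xpredT 0) => //; last by lia.
  by move=> k _ _; exact: b0.
apply: le_trans (claim n) _.
have hk := hkey n; rewrite !addn1 !addn2 in hk.
have hT := mulr_ge0 (al0 n.+2) (T0 n.+2).
have hs := @series_le_expR z n.+3 z0.
rewrite [series _ n.+3]seriesSr in hs.
move: hk hT hs; rewrite /a; lra.
Qed.

Lemma main_real : let u := fun k : nat => (l ^+ k.+2 / k.+2`!%:R * M k.+2) in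
  cvgn (series u) /\ 1 + limn (series u) <= expR (9 * l ^+ 2 / 4).
Proof.
move=> u.
have hu k : `|u k| = b' k.
  by rewrite /u /b' /b normrM normf_div normrX normr_nat (ger0_norm (M0 _)).
have hn n : series (fun k => `|u k|) n <= expR z - 1.
  rewrite (_ : (fun k => `|u k|) = b') ?bound //; apply/funext => k; exact: hu.
have cn : cvgn (series (fun k => `|u k|)).
  apply: nondecreasing_is_cvgn.
    by apply: (@nondecreasing_series _ _ xpredT 0) => k _ _; exact: normr_ge0.
  by exists (expR z - 1) => _ [n _ <-]; exact: hn.
have cu : cvgn (series u) by apply: normed_cvg.
split => //.
have -> : 9 * l^+2 / 4 = z by rewrite /z /t real_normK ?num_real.
rewrite addrC -lerBrDr.
apply: limr_le => //.
apply: nearW => n /=.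
apply: le_trans (ler_norm _) _.
apply: le_trans (hn n).
rewrite /series /=; exact: ler_norm_sum.
Qed.
End Main.

Local Open Scope ereal_scope.

Section S.
Context d (T : measurableType d) (R : realType) (P : probability T R) (X : {RV P >-> R}).

Let Ek k := 'E_P[fun x => (`|X x| ^+ k)%R].

Lemma mX k : measurable_fun setT (EFin \o (fun x => `|X x| ^+ k)%R).
Proof.
apply/measurable_EFinP; apply: measurable_funX; apply: measurableT_comp => //.
Qed.

Lemma linE (a b c : R) i1 j1 k1 : (0 <= a)%R -> (0 <= b)%R -> (0 <= c)%R ->
  (forall x, a * `|X x| ^+ i1 <= b * `|X x| ^+ j1 + c * `|X x| ^+ k1)%R ->
  a%:E * Ek i1 <= b%:E * Ek j1 + c%:E * Ek k1.
Proof.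
move=> a0 b0 c0 H; rewrite /Ek unlock.
have h0 n : forall x, setT x -> 0 <= (`|X x| ^+ n)%:E.
  by move=> x _; rewrite lee_fin exprn_ge0.
have hZ (r : R) i : (0 <= r)%R -> \int[P]_x (r%:E * (`|X x| ^+ i)%:E) =
    r%:E * \int[P]_x ((`|X x| ^+ i)%:E).
  by move=> r0; apply: ge0_integralZl_EFin => //; try exact: h0; exact: mX.
have mZ (r : R) i : measurable_fun setT (fun x => r%:E * (`|X x| ^+ i)%:E).
  by apply: emeasurable_funM => //; exact: mX.
have hZ0 (r : R) i : (0 <= r)%R -> forall x, setT x -> 0 <= r%:E * (`|X x| ^+ i)%:E.
  by move=> r0 x _; rewrite mule_ge0 // lee_fin exprn_ge0.
rewrite -!hZ // -ge0_integralD //; [|exact: hZ0|exact: hZ0].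
apply: ge0_le_integral => //; [exact: hZ0| |].
  by apply: emeasurable_funD.
by move=> x _; rewrite -!EFinM -EFinD lee_fin.
Qed.

Lemma Ek0 : Ek 0 = 1.
Proof.
rewrite /Ek (_ : (fun x => _) = cst 1%R) ?expectation_cst //.
Qed.

Lemma Ek_ge0 k : 0 <= Ek k.
Proof. by rewrite /Ek unlock; apply: integral_ge0 => x _; rewrite lee_fin exprn_ge0. Qed.

Hypothesis H : forall p : nat, (1 <= p)%N ->
  Ek (2 * p) <= ((2 ^+ p.+1 * p`!%:R)%R)%:E.

Lemma Ek_fin k : Ek k < +oo.
Proof.
case: k => [|n]; first by rewrite Ek0 ltry.
have h := @linE 1 1 1 n.+1 0 (2 * n.+1) ler01 ler01 ler01.
have h' : 1%:E * Ek n.+1 <= 1%:E * Ek 0 + 1%:E * Ek (2 * n.+1).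
  apply: h => x; rewrite !mul1r expr0.
  have y0 : (0 <= `|X x|)%R by [].
  case: (lerP `|X x| 1) => hy.
    apply: le_trans (exprn_ile1 _ y0 hy) _.
    by rewrite lerDl exprn_ge0.
  apply: le_trans (_ : (`|X x| ^+ (2 * n.+1) <= _)%R); last by rewrite lerDr.
  by apply: ler_weXn2l; [exact: ltW|lia].
rewrite !mul1e Ek0 in h'.
apply: le_lt_trans h' _.
rewrite lte_add_pinfty ?ltry //.
exact: le_lt_trans (H n.+1 isT) (ltry _).
Qed.

Definition M k := fine (Ek k).

Lemma EM k : Ek k = (M k)%:E.
Proof. by rewrite /M fineK // ge0_fin_numE ?Ek_ge0 ?Ek_fin. Qed.

Lemma M0 k : (0 <= M k)%R.
Proof. by rewrite -lee_fin -EM Ek_ge0. Qed.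

Lemma Mev q : (1 <= q)%N -> (M (2*q) <= 2^+(q.+1) * q`!%:R)%R.
Proof. by move=> q1; rewrite -lee_fin -EM; exact: H. Qed.

Lemma Modd (t : R) q : (0 <= t)%R ->
  (2 * (t^+(2*q+1) * M(2*q+1)) <= 3/4 * (t^+(2*q) * M(2*q)) + 4/3 * (t^+(2*q.+1) * M(2*q.+1)))%R.
Proof.
move=> t0.
have a0 : (0 <= 2 * t^+(2*q+1))%R by rewrite mulr_ge0 ?exprn_ge0.
have b0 : (0 <= 3/4 * t^+(2*q))%R by rewrite mulr_ge0 ?exprn_ge0.
have c0 : (0 <= 4/3 * t^+(2*q.+1))%R by rewrite mulr_ge0 ?exprn_ge0.
have h := @linE _ _ _ (2*q+1)%N (2*q)%N (2*q.+1)%N a0 b0 c0.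
have h' : (2 * t^+(2*q+1))%:E * Ek (2*q+1) <= (3/4 * t^+(2*q))%:E * Ek (2*q)
    + (4/3 * t^+(2*q.+1))%:E * Ek (2*q.+1).
  apply: h => x.
  rewrite -!mulrA -!exprMn.
  have s0 : (0 <= t * `|X x|)%R by rewrite mulr_ge0.
  move: s0; set s := (t * `|X x|)%R => s0.
  rewrite (_ : (2*q.+1 = 2*q + 2)%N); last by lia.
  rewrite (exprD s (2*q) 1) (exprD s (2*q) 2) expr1.
  have P0 : (0 <= s ^+ (2*q))%R by rewrite exprn_ge0.
  move: P0; set Q := (s ^+ (2*q))%R => P0.
  have hh : (0 <= Q * (3 - 4 * s)^+2)%R by rewrite mulr_ge0 ?sqr_ge0.
  clearbody s Q; nra.
rewrite !EM -!EFinM -EFinD lee_fin in h'.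
clear h; lra.
Qed.
End S.

Local Open Scope ereal_scope.

Theorem lemma3 (d : measure_display) (T : measurableType d) (R : realType)
  (P : probability T R) (X : {RV P >-> R}) :
  (forall p : nat, (1 <= p)%N ->
     'E_P[fun x => (`|X x| ^+ (2 * p))%R] <= ((2 ^+ p.+1 * p`!%:R)%R)%:E) ->
  forall l : R,
    (forall k : nat, 'E_P[fun x => (`|X x| ^+ k)%R] < +oo) /\
    let u := fun k : nat =>
      (l ^+ k.+2 / k.+2`!%:R * fine 'E_P[fun x => (`|X x| ^+ k.+2)%R])%R in
    cvgn (series u) /\
    (1 + limn (series u) <= expR (9 * l ^+ 2 / 4))%R.
Proof.
move=> H l; split; first exact: (@Ek_fin d T R P X H).
have := (@main_real R (@M d T R P X) (@M0 d T R P X H) (@Mev d T R P X H) (@Modd d T R P X H) l).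
rewrite /M /=. move=> [h1 h2]; split. exact: h1. exact: h2.
Qed.
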